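(* Let $a,b,x$ be non-commuting indeterminates and define polynomials $d_n=d_n(a,b,x)\in\mathbb{Z}\langle a,b,x\rangle$ for $n\ge 1$ by $$d_1=1,\qquad d_n=d_{n-1}\,x+\sum_{k=2}^{n-1} d_{n-k}\,a\,d_k\,b\quad (n\ge 2),$$ and set $c_n(a,b,x)=a\,d_n(a,b,x)\,b$ for $n\ge1$. Then, in the ring $\mathbb{Z}\langle\langle a,b\rangle\rangle$ of formal power series in the non-commuting variables $a,b$, $$1-\sum_{n=1}^{\infty} c_n(a,b,ab-ba)=\Big(\sum_{n\ge 0}a^nb^n\Big)^{-1}.$$
   Context: $\mathbb{Z}\langle\langle a,b\rangle\rangle$ denotes formal power series in non-commuting variables $a,b$ with integer coefficients; a series with constant term $1$ is invertible there. $c_n(a,b,ab-ba)$ denotes the polynomial obtained from $c_n(a,b,x)$ by substituting $x\mapsto ab-ba$; since $c_n(a,b,ab-ba)$ is homogeneous of degree $2n$ in $a,b$, the infinite sum converges formally. *)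

(* Defs.v *)
From HB Require Import structures.
From mathcomp Require Import all_boot all_order all_algebra.
Set Implicit Arguments. Unset Strict Implicit. Unset Printing Implicit Defensive.
Import Order.TTheory GRing.Theory Num.Theory.
Local Open Scope ring_scope.

Inductive letter3 := La | Lb | Lx.

(* A polynomial in Z<a,b,x> is a formal Z-linear combination of words
   (monomials) over the alphabet {a,b,x}, given as a list of
   (coefficient, word) pairs. *)
Definition ncpoly := seq (int * seq letter3).

Definition padd (p q : ncpoly) : ncpoly := p ++ q.
Definition pmul (p q : ncpoly) : ncpoly :=
  [seq ((m.1 * n.1)%R, m.2 ++ n.2) | m <- p, n <- q].
Definition pone : ncpoly := [:: (1%R, [::])].
Definition pa : ncpoly := [:: (1%R, [:: La])].
Definition pb : ncpoly := [:: (1%R, [:: Lb])].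
Definition px : ncpoly := [:: (1%R, [:: Lx])].
Definition psum (ps : seq ncpoly) : ncpoly := foldr padd [::] ps.

(* Given ds = [:: d_1; ...; d_(n-1)], compute
   d_n = d_(n-1) x + sum_(k=2)^(n-1) d_(n-k) a d_k b. *)
Definition dnext (ds : seq ncpoly) (n : nat) : ncpoly :=
  let D k := nth [::] ds k.-1 in
  padd (pmul (D n.-1) px)
       (psum [seq pmul (pmul (pmul (D (n - k)%N) pa) (D k)) pb
             | k <- iota 2 (n - 2)]).

(* dlist n = [:: d_1; ...; d_n] *)
Fixpoint dlist (n : nat) : seq ncpoly :=
  match n with
  | 0 => [::]
  | m.+1 => if m is 0 then [:: pone] else rcons (dlist m) (dnext (dlist m) n)
  end.

Definition d (n : nat) : ncpoly := nth [::] (dlist n) n.-1.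

Definition c (n : nat) : ncpoly := pmul (pmul pa (d n)) pb.

(* letters: false = a, true = b; a series is its coefficient function on words *)
Definition series := seq bool -> int.

Definition sadd (f g : series) : series := fun w => f w + g w.
Definition sopp (f : series) : series := fun w => - f w.
Definition sscale (k : int) (f : series) : series := fun w => k * f w.
Definition smul (f g : series) : series :=
  fun w => \sum_(i < (size w).+1) f (take i w) * g (drop i w).
Definition smono (u : seq bool) : series := fun w => (w == u)%:Z.
Definition s0 : series := fun _ => 0.
Definition s1 : series := smono [::].
Definition sa : series := smono [:: false].
Definition sb : series := smono [:: true].
Definition sexp (f : series) (n : nat) : series := iter n (smul f) s1.

Definition subst_letter (l : letter3) : series :=
  match l with
  | La => sa
  | Lb => sb
  | Lx => sadd (smul sa sb) (sopp (smul sb sa))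
  end.
Definition subst_word (u : seq letter3) : series :=
  foldr (fun l s => smul (subst_letter l) s) s1 u.
Definition subst (p : ncpoly) : series :=
  foldr (fun m s => sadd (sscale m.1 (subst_word m.2)) s) s0 p.

Definition HasSum (F : nat -> series) (S : series) : Prop :=
  forall w, exists N, forall M, (N <= M)%N -> \sum_(n < M) F n w = S w.

(* Main.v *)
Require Import Defs.
From HB Require Import structures.
From mathcomp Require Import all_boot all_order all_algebra.
From mathcomp Require Import ring zify.
From Stdlib Require Import FunctionalExtensionality.
Set Implicit Arguments. Unset Strict Implicit. Unset Printing Implicit Defensive.
Import Order.TTheory GRing.Theory Num.Theory.
Local Open Scope ring_scope.

Definition der (x : bool) (f : series) : series := fun u => f (x :: u).

Lemma smul_nil f g : smul f g [::] = f [::] * g [::].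
Proof. by rewrite /smul big_ord_recl big_ord0 addr0. Qed.

Lemma smul_cons f g x w :
  smul f g (x :: w) = f [::] * g (x :: w) + smul (der x f) g w.
Proof.
by rewrite /smul big_ord_recl /=.
Qed.

Lemma smulDl f g h : smul (sadd f g) h = sadd (smul f h) (smul g h).
Proof.
apply: functional_extensionality => w; rewrite /smul /sadd -big_split /=.
by apply: eq_bigr => i _; rewrite mulrDl.
Qed.
Lemma smulDr f g h : smul h (sadd f g) = sadd (smul h f) (smul h g).
Proof.
apply: functional_extensionality => w; rewrite /smul /sadd -big_split /=.
by apply: eq_bigr => i _; rewrite mulrDr.
Qed.
Lemma smulNl f g : smul (sopp f) g = sopp (smul f g).
Proof.
apply: functional_extensionality => w; rewrite /smul /sopp -sumrN.
by apply: eq_bigr => i _; rewrite mulNr.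
Qed.
Lemma smulNr f g : smul f (sopp g) = sopp (smul f g).
Proof.
apply: functional_extensionality => w; rewrite /smul /sopp -sumrN.
by apply: eq_bigr => i _; rewrite mulrN.
Qed.
Lemma smulZl k f g : smul (sscale k f) g = sscale k (smul f g).
Proof.
apply: functional_extensionality => w; rewrite /smul /sscale mulr_sumr.
by apply: eq_bigr => i _; rewrite mulrA.
Qed.
Lemma smulZr k f g : smul f (sscale k g) = sscale k (smul f g).
Proof.
apply: functional_extensionality => w; rewrite /smul /sscale mulr_sumr.
by apply: eq_bigr => i _; rewrite mulrCA.
Qed.
Lemma smul0l f : smul s0 f = s0.
Proof. by apply: functional_extensionality => w; rewrite /smul big1 // => i _; rewrite mul0r. Qed.
Lemma smul0r f : smul f s0 = s0.
Proof. by apply: functional_extensionality => w; rewrite /smul big1 // => i _; rewrite mulr0. Qed.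

Lemma der_smul x f g :
  der x (smul f g) = sadd (sscale (f [::]) (der x g)) (smul (der x f) g).
Proof. by apply: functional_extensionality => u; rewrite /der smul_cons. Qed.

Lemma smulA f g h : smul (smul f g) h = smul f (smul g h).
Proof.
apply: functional_extensionality => w.
elim: w f g h => [|x w IH] f g h; first by rewrite !smul_nil mulrA.
rewrite !smul_cons der_smul smulDl smulZl smul_nil /sadd /sscale IH.
ring.
Qed.

Lemma smul1l f : smul s1 f = f.
Proof.
apply: functional_extensionality => w; case: w => [|x w].
  by rewrite smul_nil /s1 /smono eqxx mul1r.
rewrite smul_cons.
have -> : der x s1 = s0 by apply: functional_extensionality.
by rewrite smul0l /s1 /smono eqxx mul1r /s0 addr0.
Qed.

Lemma smul1r f : smul f s1 = f.
Proof.
apply: functional_extensionality => w; elim: w f => [|x w IH] f.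
  by rewrite smul_nil /s1 /smono eqxx mulr1.
by rewrite smul_cons IH /s1 /smono /= mulr0 add0r.
Qed.

Definition ord_ge (f : series) (n : nat) := forall w, (size w < n)%N -> f w = 0.

Lemma ord_mul f g m n : ord_ge f m -> ord_ge g n -> ord_ge (smul f g) (m + n)%N.
Proof.
move=> hf hg w hw; rewrite /smul big1 // => i _.
have hi := ltn_ord i.
case: (ltnP i m) => him.
  by rewrite hf ?mul0r // size_take_min; lia.
by rewrite hg ?mulr0 // size_drop; lia.
Qed.
Lemma ord_le f m n : ord_ge f n -> (m <= n)%N -> ord_ge f m.
Proof. move=> h hmn w hw; apply: h; lia. Qed.
Lemma ord_add f g n : ord_ge f n -> ord_ge g n -> ord_ge (sadd f g) n.
Proof. by move=> hf hg w hw; rewrite /sadd hf // hg // addr0. Qed.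
Lemma ord_opp f n : ord_ge f n -> ord_ge (sopp f) n.
Proof. by move=> hf w hw; rewrite /sopp hf // oppr0. Qed.
Lemma ord_scale k f n : ord_ge f n -> ord_ge (sscale k f) n.
Proof. by move=> hf w hw; rewrite /sscale hf // mulr0. Qed.
Lemma ord0 f : ord_ge f 0.
Proof. by []. Qed.
Lemma ord_s0 n : ord_ge s0 n.
Proof. by []. Qed.
Lemma ord_sa : ord_ge sa 1%N.
Proof. by case. Qed.
Lemma ord_sb : ord_ge sb 1%N.
Proof. by case. Qed.

Lemma ord_all_0 f : (forall n, ord_ge f n) -> f = s0.
Proof. by move=> h; apply: functional_extensionality => w; apply: (h (size w).+1). Qed.

Lemma contract f g h m : ord_ge g m.+1 -> f = smul g (smul f h) -> f = s0.
Proof.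
move=> hg e; apply: ord_all_0 => n; elim: n => [|n IH]; first exact: ord0.
rewrite e; apply: (ord_le (m := n.+1) (n := m.+1 + (n + 0))); last lia.
apply: ord_mul => //; apply: ord_mul => //; exact: ord0.
Qed.

Lemma contract_r f h m : ord_ge h m.+1 -> f = smul f h -> f = s0.
Proof.
move=> hh e; apply: ord_all_0 => n; elim: n => [|n IH]; first exact: ord0.
rewrite e; apply: (ord_le (m := n.+1) (n := (n + m.+1)%N)); last lia.
exact: ord_mul.
Qed.

Definition ordfam (F : nat -> series) := forall n, ord_ge (F n) n.
Definition sumser (F : nat -> series) : series :=
  fun w => \sum_(n < (size w).+1) F n w.

Lemma sumser_trunc F w M :
  ordfam F -> (size w < M)%N -> sumser F w = \sum_(n < M) F n w.
Proof.
move=> hF hM; rewrite /sumser (big_ord_widen _ (fun n => F n w) hM) big_mkcond /=.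
apply: eq_bigr => i _; case: ifP => // /negbT hi; rewrite hF //; lia.
Qed.

Lemma HasSum_sumser F : ordfam F -> HasSum F (sumser F).
Proof.
move=> hF w; exists (size w).+1 => M hM; by rewrite (sumser_trunc (w:=w) (M:=M) hF).
Qed.

Lemma HasSum_uniq F S S' : HasSum F S -> HasSum F S' -> S = S'.
Proof.
move=> h h'; apply: functional_extensionality => w.
have [N hN] := h w; have [N' hN'] := h' w.
rewrite -(hN (maxn N N')) ?leq_maxl // -(hN' (maxn N N')) ?leq_maxr //.
Qed.

Lemma smul_sumser_l F g : ordfam F ->
  smul (sumser F) g = sumser (fun n => smul (F n) g).
Proof.
move=> hF; apply: functional_extensionality => w.
rewrite /smul /sumser.
rewrite (eq_bigr (fun i : 'I_(size w).+1 => \sum_(n < (size w).+1) F n (take i w) * g (drop i w))); last first.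
  move=> i _; rewrite -/(sumser F (take i w)) (sumser_trunc (w:=take i w) (M := (size w).+1) hF) ?mulr_suml //.
  rewrite size_take_min; have := ltn_ord i; lia.
by rewrite exchange_big.
Qed.

Lemma smul_sumser_r F g : ordfam F ->
  smul g (sumser F) = sumser (fun n => smul g (F n)).
Proof.
move=> hF; apply: functional_extensionality => w.
rewrite /smul /sumser.
rewrite (eq_bigr (fun i : 'I_(size w).+1 => \sum_(n < (size w).+1) g (take i w) * F n (drop i w))); last first.
  move=> i _; rewrite -/(sumser F (drop i w)) (sumser_trunc (w:=drop i w) (M := (size w).+1) hF) ?mulr_sumr //.
  rewrite size_drop; have := ltn_ord i; lia.
by rewrite exchange_big.
Qed.

Lemma sumser_add F G : sumser (fun n => sadd (F n) (G n)) = sadd (sumser F) (sumser G).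
Proof. by apply: functional_extensionality => w; rewrite /sumser /sadd big_split. Qed.

Lemma ordfam_shift F : ordfam F -> ordfam (fun n => F n.+1).
Proof. by move=> hF n; apply: (ord_le (hF n.+1)). Qed.

Lemma sumser_shift F : ordfam F -> sumser F = sadd (F 0%N) (sumser (fun n => F n.+1)).
Proof.
move=> hF; apply: functional_extensionality => w.
rewrite /sadd /sumser big_ord_recl [in RHS]big_ord_recr /= (hF (size w).+1) // addr0.
by [].
Qed.

Lemma cauchy_nat (h : nat -> nat -> int) N :
  (forall j k, (N <= j + k)%N -> h j k = 0) ->
  \sum_(j < N) \sum_(k < N) h j k = \sum_(p < N) \sum_(i < p.+1) h (p - i)%N i.
Proof.
move=> hz.
rewrite exchange_big /=; symmetry.
rewrite (eq_bigr (fun p : 'I_N => \sum_(i < N) if (i <= p)%N then h (p - i)%N i else 0)); last first.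
  move=> p _; rewrite (big_ord_widen _ (fun i => h (p - i)%N i) (ltn_ord p)) big_mkcond /=.
  by apply: eq_bigr => i _; rewrite ltnS.
rewrite exchange_big /=; apply: eq_bigr => i _.
rewrite -(big_mkord xpredT (fun p => if (i <= p)%N then h (p - i)%N i else 0)).
rewrite -(big_mkord xpredT (fun j => h j i)).
have hi := ltn_ord i.
rewrite (big_cat_nat _ (n:=i)) //=; last by lia.
rewrite [X in X + _]big_nat_cond [X in X + _]big1 ?add0r; last first.
  by move=> p /andP[/andP[_ hp] _]; rewrite leqNgt hp.
rewrite -[in X in X = _](add0n i) big_addn.
rewrite [in RHS](big_cat_nat _ (n:=(N - i)%N)) //=; last by lia.
rewrite [X in _ = _ + X]big_nat_cond [X in _ = _ + X]big1 ?addr0; last first.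
  move=> j /andP[/andP[hj _] _]; apply: hz; lia.
apply: eq_big_nat => p _; rewrite leq_addl addnK //.
Qed.

Definition conv (F G : nat -> series) (p : nat) : series :=
  fun w => \sum_(i < p.+1) smul (F (p - i)%N) (G i) w.

Lemma ordfam_conv F G : ordfam F -> ordfam G -> ordfam (conv F G).
Proof.
move=> hF hG p w hw; rewrite /conv big1 // => i _.
have h := ord_mul (hF (p - i)%N) (hG i).
have hi := ltn_ord i.
apply: (ord_le (m:=p) h); lia.
Qed.

Lemma smul_sumser F G : ordfam F -> ordfam G ->
  smul (sumser F) (sumser G) = sumser (conv F G).
Proof.
move=> hF hG; rewrite smul_sumser_l //.
have -> : (fun n => smul (F n) (sumser G)) = (fun n => sumser (fun k => smul (F n) (G k))).
  by apply: functional_extensionality => n; rewrite smul_sumser_r.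
apply: functional_extensionality => w; rewrite /sumser /conv.
apply: (cauchy_nat (h := fun j k => smul (F j) (G k) w)) => j k hjk.
apply: (ord_mul (hF j) (hG k)); lia.
Qed.

Lemma subst_nil : subst [::] = s0. Proof. by []. Qed.
Lemma subst_cons m p : subst (m :: p) = sadd (sscale m.1 (subst_word m.2)) (subst p).
Proof. by []. Qed.

Lemma subst_cat p q : subst (p ++ q) = sadd (subst p) (subst q).
Proof.
elim: p => [|m p IH] /=.
  by apply: functional_extensionality => w; rewrite /sadd /s0 add0r.
rewrite IH; apply: functional_extensionality => w.
by rewrite /sadd addrA.
Qed.

Lemma subst_word_cat u v : subst_word (u ++ v) = smul (subst_word u) (subst_word v).
Proof.
elim: u => [|l u IH] /=; first by rewrite smul1l.
by rewrite IH smulA.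
Qed.

Lemma subst_map (m : int * seq letter3) (q : ncpoly) :
  subst [seq ((m.1 * n.1)%R, m.2 ++ n.2) | n <- q] =
  smul (sscale m.1 (subst_word m.2)) (subst q).
Proof.
elim: q => [|n q IH]; first by rewrite subst_nil smul0r.
rewrite map_cons !subst_cons /= IH subst_word_cat smulDr !smulZl !smulZr.
by apply: functional_extensionality => w; rewrite /sadd /sscale mulrA.
Qed.

Lemma subst_pmul p q : subst (pmul p q) = smul (subst p) (subst q).
Proof.
elim: p => [|m p IH]; first by rewrite smul0l.
by rewrite /pmul /= subst_cat subst_map -/(pmul p q) IH smulDl.
Qed.

Definition Xs : series := sadd (smul sa sb) (sopp (smul sb sa)).

Lemma subst1 (l : letter3) : subst [:: (1, [:: l])] = subst_letter l.
Proof.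
apply: functional_extensionality => w.
by rewrite /subst /= smul1r /sadd /sscale /s0 mul1r addr0.
Qed.
Lemma subst_pone : subst pone = s1.
Proof.
apply: functional_extensionality => w.
by rewrite /subst /= /sadd /sscale /s0 mul1r addr0.
Qed.

Definition sumS (l : seq series) : series := fun w => \sum_(f <- l) f w.
Lemma subst_psum ps : subst (psum ps) = sumS (map subst ps).
Proof.
elim: ps => [|p ps IH]; apply: functional_extensionality => w.
  by rewrite /sumS big_nil.
by rewrite /= subst_cat IH /sumS big_cons.
Qed.

Lemma dlist_SS n : dlist n.+2 = rcons (dlist n.+1) (dnext (dlist n.+1) n.+2).
Proof. by []. Qed.

Lemma size_dlist n : size (dlist n) = n.
Proof. elim: n => [|[|m] IH] //; by rewrite dlist_SS size_rcons IH. Qed.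

Lemma dlist_nth n k : (k < n)%N -> nth [::] (dlist n) k = d k.+1.
Proof.
elim: n => [//|n IH] hk.
case: (ltnP k n) => hkn; last first.
  have -> : k = n by lia.
  by rewrite /d.
case: n IH hk hkn => [//|n] IH hk hkn.
by rewrite dlist_SS nth_rcons size_dlist hkn IH.
Qed.

Lemma d_rec n : d n.+2 = dnext (dlist n.+1) n.+2.
Proof. by rewrite /d dlist_SS nth_rcons size_dlist ltnn eqxx. Qed.

Definition Dn n := subst (d n).

Lemma Dn_rec n : Dn n.+2 = sadd (smul (Dn n.+1) Xs)
   (fun w => \sum_(i < n) smul (smul (smul (Dn (n.+2 - (2 + i))) sa) (Dn (2 + i))) sb w).
Proof.
rewrite /Dn d_rec /dnext subst_cat subst_pmul subst1 dlist_nth //.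
congr sadd; rewrite subst_psum; apply: functional_extensionality => w.
rewrite /sumS big_map.
have -> : (n.+2 - 2 = n)%N by lia.
rewrite (_ : iota 2 n = map (addn 2) (iota 0 n)); last by rewrite -iotaDl.
rewrite big_map -(big_mkord xpredT (fun i => smul (smul (smul (subst (d (n.+2 - (2 + i)))) sa) (subst (d (2 + i)))) sb w)) /index_iota subn0.
rewrite big_map big_seq [RHS]big_seq; apply: eq_bigr => i.
rewrite mem_iota add0n => hi.
rewrite !subst_pmul !subst1 !dlist_nth; try lia.
have -> : ((n.+2 - (2 + i)).-1).+1 = (n.+2 - (2 + i))%N by lia.
have -> : ((2 + i).-1).+1 = (2 + i)%N by lia.
by [].
Qed.

Definition E m := Dn m.+1.
Definition FA j := smul (E j) sa.
Definition GB k := smul (E k.+1) sb.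
Definition Cm m := if m is p.+1 then conv FA GB p else s0.

Lemma E_rec m : E m.+1 = sadd (smul (E m) Xs) (Cm m).
Proof.
rewrite /E Dn_rec; congr sadd.
apply: functional_extensionality => w.
case: m => [|p]; first by rewrite big_ord0.
rewrite /Cm /conv; apply: eq_bigr => i _; rewrite /FA /GB smulA.
have hi := ltn_ord i.
have -> : (p.+3 - (2 + i) = (p - i).+1)%N by lia.
have -> : (2 + i = i.+2)%N by lia.
by [].
Qed.

Lemma E0 : E 0 = s1.
Proof. rewrite /E /Dn (_ : d 1 = pone) //; exact: subst_pone. Qed.

Lemma ord_Xs : ord_ge Xs 1%N.
Proof.
apply: ord_add; first by apply: (ord_le (ord_mul ord_sa ord_sb)).
by apply: ord_opp; apply: (ord_le (ord_mul ord_sb ord_sa)).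
Qed.

Lemma conv_ord F G a b p : (forall j, ord_ge (F j) (j + a)%N) ->
  (forall k, ord_ge (G k) (k + b)%N) -> ord_ge (conv F G p) (p + a + b)%N.
Proof.
move=> hF hG w hw; rewrite /conv big1 // => i _.
have hi := ltn_ord i.
have h := ord_mul (hF (p - i)%N) (hG i).
apply: (ord_le (m:=(p + a + b)%N) h); lia.
Qed.

Lemma ordE_aux m : forall k, (k <= m)%N -> ord_ge (E k) k.
Proof.
elim: m => [|m IH] k hk.
  have -> : k = 0%N by lia.
  exact: ord0.
case: (leqP k m) => hkm; first exact: IH.
have -> : k = m.+1 by lia.
rewrite E_rec; apply: ord_add.
  apply: (ord_le (n := (m + 1)%N)); last lia.
  exact: ord_mul (IH m (leqnn m)) ord_Xs.
case: m IH hk hkm => [|p] IH hk hkm; first exact: ord_s0.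
move=> w hw; rewrite /Cm /conv big1 // => i _.
have hi := ltn_ord i.
have h := ord_mul (ord_mul (IH (p - i)%N ltac:(lia)) ord_sa)
                  (ord_mul (IH i.+1 ltac:(lia)) ord_sb).
apply: (ord_le (m := p.+2) h); lia.
Qed.

Lemma ordE : ordfam E.
Proof. by move=> n; apply: (ordE_aux (m:=n)). Qed.
Arguments ordE : clear implicits.

Lemma ordFA : forall j, ord_ge (FA j) (j + 1)%N.
Proof. move=> j; exact: (ord_mul (ordE j) ord_sa). Qed.
Arguments ordFA : clear implicits.
Lemma ordGB : forall k, ord_ge (GB k) (k + 2)%N.
Proof. move=> k; apply: (ord_le (n := (k.+1 + 1)%N)); [exact: ord_mul (ordE k.+1) ord_sb | lia]. Qed.
Arguments ordGB : clear implicits.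

Lemma ordCm : ordfam Cm.
Proof.
case=> [|p]; first exact: ord_s0.
apply: (ord_le (n := (p + 1 + 2)%N)); [exact: conv_ord ordFA ordGB | lia].
Qed.

Definition Es := sumser E.
Definition Ssh := sumser (fun n => E n.+1).

Lemma hEs : Es = sadd s1 Ssh.
Proof. by rewrite /Es (sumser_shift ordE) E0. Qed.

Lemma ordfam_w F a : (forall n, ord_ge (F n) (n + a)%N) -> ordfam F.
Proof. by move=> h n; apply: (ord_le (h n)); lia. Qed.

Lemma hSsh : Ssh = sadd (smul Es Xs) (smul (smul Es sa) (smul Ssh sb)).
Proof.
transitivity (sumser (fun m => sadd (smul (E m) Xs) (Cm m))).
  by rewrite /Ssh; congr sumser; apply: functional_extensionality => m; rewrite E_rec.
rewrite sumser_add -smul_sumser_l; last exact: ordE.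
congr sadd.
rewrite (sumser_shift ordCm) /=.
have -> : (fun n => Cm n.+1) = conv FA GB by [].
rewrite -smul_sumser; [| exact: (ordfam_w ordFA) | exact: (ordfam_w ordGB)].
rewrite /FA /GB -smul_sumser_l; last exact: ordE.
rewrite -(smul_sumser_l (F := fun n => E n.+1)); last exact: ordfam_shift ordE.
by apply: functional_extensionality => w; rewrite /sadd /s0 add0r.
Qed.

Lemma sexpS f n : sexp f n.+1 = smul f (sexp f n). Proof. by []. Qed.
Lemma sexpSr f n : sexp f n.+1 = smul (sexp f n) f.
Proof.
elim: n => [|n IH]; first by rewrite sexpS /sexp /= smul1l smul1r.
by rewrite [LHS]sexpS [in LHS]IH -smulA -sexpS.
Qed.
Lemma ord_sexp f n : ord_ge f 1%N -> ord_ge (sexp f n) n.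
Proof.
move=> hf; elim: n => [|n IH]; first exact: ord0.
rewrite sexpS; exact: (ord_mul hf IH).
Qed.

Definition Gf n := smul (sexp sa n) (sexp sb n).
Lemma ordGf : ordfam Gf.
Proof.
move=> n; apply: (ord_le (n := (n + n)%N)); last lia.
exact: ord_mul (ord_sexp (n:=n) ord_sa) (ord_sexp (n:=n) ord_sb).
Qed.
Lemma Gf_S n : Gf n.+1 = smul sa (smul (Gf n) sb).
Proof. by rewrite /Gf sexpS sexpSr !smulA. Qed.

Definition Gs := sumser Gf.
Lemma hG : Gs = sadd s1 (smul sa (smul Gs sb)).
Proof.
rewrite {1}/Gs (sumser_shift ordGf).
have -> : Gf 0 = s1 by rewrite /Gf /sexp /= smul1l.
congr sadd.
have -> : (fun n => Gf n.+1) = (fun n => smul sa (smul (Gf n) sb)).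
  by apply: functional_extensionality => n; rewrite Gf_S.
rewrite -smul_sumser_r; last first.
  move=> n; apply: (ord_le (n := (n + 1)%N)); last lia.
  exact: ord_mul (ordGf (n:=n)) ord_sb.
by rewrite -smul_sumser_l //; exact: ordGf.
Qed.

Lemma zf f g : f = g -> sadd f (sopp g) = s0.
Proof. by move=> ->; apply: functional_extensionality => w; rewrite /sadd /sopp subrr. Qed.

Ltac expand := do 5 (rewrite ?smulDl ?smulDr ?smulNl ?smulNr ?smulA ?smul1l ?smul1r ?smul0l ?smul0r).
Ltac pw := try unfold sadd; try unfold sopp; try unfold s0; cbv beta.

Lemma keyY : sadd (smul Es (smul sb Gs)) (sopp (smul Gs sb)) = s0.
Proof.
apply: (contract (m := 0%N) (g := smul Es sa) (h := sb)).
  exact: (ord_mul (ord0 Es) ord_sa).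
have hW := zf hG.
have hR := zf hSsh.
apply: functional_extensionality => w.
have h1 := congr1 (fun X => smul Es (smul sb X) w) hW.
have h2 := congr1 (fun X => smul X (smul Gs sb) w) hR.
have h3 := congr1 (fun X => smul Es (smul X sb) w) hW.
move: h1 h2 h3; cbv beta; rewrite !smul0l !smul0r /Xs hEs.
expand. pw. lia.
Qed.

Definition Hs := sadd s1 (sopp (smul sa (smul Es sb))).

Lemma keyHG : smul Hs Gs = s1.
Proof.
have hW := zf hG.
apply: functional_extensionality => w.
have h1 := congr1 (fun X => smul sa X w) keyY.
have h2 := congr1 (fun X => X w) hW.
move: h1 h2; cbv beta; rewrite !smul0r /Hs.
expand. pw. lia.
Qed.

Lemma keyGH : smul Gs Hs = s1.
Proof.
have hQ : sadd (smul Gs Hs) (sopp s1) = s0.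
  apply: (contract_r (m := 1%N) (h := sopp (smul sa (smul Gs sb)))).
    apply: ord_opp; apply: (ord_le (n := (1 + (0 + 1))%N)); last lia.
    exact: ord_mul ord_sa (ord_mul (ord0 Gs) ord_sb).
  have hW := zf hG.
  have hK := zf keyHG.
  apply: functional_extensionality => w.
  have h1 := congr1 (fun X => smul Gs X w) hK.
  have h2 := congr1 (fun X => smul (sadd (smul Gs Hs) (sopp s1)) X w) hW.
  move: h1 h2; cbv beta; rewrite !smul0r /Hs.
  expand. pw. lia.
apply: functional_extensionality => w.
have := congr1 (fun X => X w) hQ; cbv beta; pw; lia.
Qed.

Lemma subst_c n : subst (c n.+1) = smul sa (smul (E n) sb).
Proof. by rewrite /c !subst_pmul /pa /pb !subst1 smulA. Qed.

Theorem theorem1 :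
  let C := fun n : nat => subst (c n.+1) in
  let G := fun n : nat => smul (sexp sa n) (sexp sb n) in
  (exists S, HasSum C S) /\ (exists T, HasSum G T) /\
  forall S T, HasSum C S -> HasSum G T ->
    smul (sadd s1 (sopp S)) T = s1 /\ smul T (sadd s1 (sopp S)) = s1.
Proof.
move=> C G.
have hC : C = (fun n => smul sa (smul (E n) sb)).
  by apply: functional_extensionality => n; rewrite /C subst_c.
have ordEb : ordfam (fun n => smul (E n) sb).
  move=> n; apply: (ord_le (n := (n + 1)%N)); last lia.
  exact: ord_mul (ordE n) ord_sb.
have ordC : ordfam C.
  rewrite hC => n; apply: (ord_le (n := (1 + n)%N)); last lia.
  exact: ord_mul ord_sa (ordEb n).
have ordG : ordfam G by exact: ordGf.
split; first by exists (sumser C); exact: HasSum_sumser.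
split; first by exists (sumser G); exact: HasSum_sumser.
move=> S T hS hT.
have -> : S = smul sa (smul Es sb).
  rewrite (HasSum_uniq hS (HasSum_sumser ordC)) hC -smul_sumser_r //.
  by rewrite -smul_sumser_l //; exact: ordE.
have -> : T = Gs by rewrite (HasSum_uniq hT (HasSum_sumser ordG)).
split; [exact: keyHG | exact: keyGH].
Qed.
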